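(* Let $P$ be a planar point set of $n$ points in general position, let $W\in\mathbb{Z}^{n\times3}$ be arbitrary, and let $\mathcal{Q}$ be an arbitrary quadrangle tree for $P$. Then there exists an injective map \[ \Phi: V(P,W)\hookrightarrow \mathrm{OD}(P,\mathcal{Q})\times\mathrm{CA}(W)\times\mathrm{HL}(P). \]
   Context: General position: no duplicates, no three collinear. $\mathrm{CH}(P)$ is the convex hull, $\mathrm{ch}(P)$ the points of $P$ on its boundary, $k=|\mathrm{ch}(P)|$. $\mathbb{I}_P$ is the set of arrays $I_P$ of length $n$ (indices $1,\dots,n$) storing the points of $P$. A hull list of $I_P$ is a sequence $(h_1,\dots,h_k)$ such that $I_P[h_1],\dots,I_P[h_k]$ are the points of $\mathrm{ch}(P)$ in cyclic order with $I_P[h_1]$ the leftmost. $\mathrm{HL}(P)$ is the set of all integer lists of length $k$ that are a hull list of some $I_P\in\mathbb{I}_P$. A witness list of $I_P$ is $W=(a_i,b_i,c_i)_{i=1}^n$ with $a_i=b_i=c_i=-1$ if $I_P[i]\in\mathrm{ch}(P)$ and otherwise $I_P[i]$ in the interior of triangle $(I_P[a_i],I_P[b_i],I_P[c_i])$. $V(P,W)=\{I_P\in\mathbb{I}_P: W\text{ is a witness list of }I_P\}$. A corner assignment of $W$ is a map $C$ on $[n]$ with $C(i)\in\{a_i,b_i,c_i\}$ for all $i$; $\mathrm{CA}(W)$ is their set. A rooted convex polygon $(C,p,q)$ is a convex polygon with a chosen edge $pq$; for distinct vertices $r,s$ of $C$, $C^{rs}$ is the piece of $C$ cut by line $rs$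 not containing $pq$. A quadrangle tree of $(C,p,q)$ is a binary tree whose nodes store quadrangles spanned by (up to) four vertices of $C$: the root stores $p,q,s,r$ where $rs$ is an edge of $C$ (allowing $p=r$ and/or $q=s$); if $p\ne r$ the root has a child whose subtree is a quadrangle tree of $(C^{pr},p,r)$; if $q\ne s$ the root has a child whose subtree is a quadrangle tree of $(C^{qs},q,s)$. Each node's rooted edge is the chosen edge of its rooted polygon. A quadrangle tree for $P$ is a quadrangle tree of $(\mathrm{CH}(P),p,q)$ for an edge $pq$ of $\mathrm{CH}(P)$. The population of a node is the set of points of $P$ on or inside its quadrangle except those on the line of its rooted edge; $r(x)$ denotes the node whose population contains $x$. Partial order: $x\prec_{\mathcal{Q}}y$ if $r(x)$ is a strict ancestor of $r(y)$, or $r(x)=r(y)$ and $y$ lies deeper than $x$ inside the halfplane bounded by the rooted-edge line of $r(x)$ containing its quadrangle. A downdraft is a map $\varphi:P-\mathrm{ch}(P)\to P$ with $x\prec_{\mathcal{Q}}\varphi(x)$ for all $x$; an ordered downdraft is a downdraft plus a total order on each fiber $\varphi^{-1}(\{y\})$; $\mathrm{OD}(P,\mathcal{Q})$ is the set of ordered downdrafts. *)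

(* Defs.v *)
From HB Require Import structures.
From mathcomp Require Import all_boot all_order all_algebra.
From mathcomp Require Import finmap.
Set Implicit Arguments. Unset Strict Implicit. Unset Printing Implicit Defensive.
Import Order.TTheory GRing.Theory Num.Theory.
Local Open Scope ring_scope.


Section Geometry.
Variable R : realFieldType.

Definition pt := (R * R)%type.

(* twice the signed area of (a,b,c); > 0 iff a,b,c make a left turn *)
Definition orient (a b c : pt) : R :=
  (b.1 - a.1) * (c.2 - a.2) - (b.2 - a.2) * (c.1 - a.1).

Definition general_position (P : {fset pt}) : Prop :=
  forall a b c, a \in P -> b \in P -> c \in P ->
    a != b -> b != c -> a != c -> orient a b c != 0.

(* x in P lies on the boundary of CH(P): some line through x has all of P
   in one closed halfplane (supporting line of the convex hull). *)
Definition on_hull (P : {fset pt}) (x : pt) : Prop :=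
  exists v : pt, v != (0, 0) /\
    forall y, y \in P -> v.1 * (y.1 - x.1) + v.2 * (y.2 - x.2) <= 0.

Definition in_open_triangle (x a b c : pt) : Prop :=
  (0 < orient a b x /\ 0 < orient b c x /\ 0 < orient c a x) \/
  (orient a b x < 0 /\ orient b c x < 0 /\ orient c a x < 0).

Definition in_quadrangle (x p q s r : pt) : Prop :=
  exists a b c d : R, [/\ 0 <= a, 0 <= b, 0 <= c & 0 <= d] /\
    a + b + c + d = 1 /\
    x.1 = a * p.1 + b * q.1 + c * s.1 + d * r.1 /\
    x.2 = a * p.2 + b * q.2 + c * s.2 + d * r.2.

(* h lists the points of ch(P) in counterclockwise cyclic order *)
Definition hull_ccw (P : {fset pt}) (h : seq pt) : Prop :=
  [/\ uniq h,
      (forall x, x \in h <-> (x \in P /\ on_hull P x)) &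
      forall j, (j < size h)%N -> forall x, x \in P ->
        x != nth (0, 0) h j -> x != nth (0, 0) h (j.+1 %% size h) ->
        0 < orient (nth (0, 0) h j) (nth (0, 0) h (j.+1 %% size h)) x].

Definition leftmost (x : pt) (h : seq pt) : Prop :=
  x \in h /\ forall y, y \in h -> x.1 < y.1 \/ (x.1 = y.1 /\ x.2 <= y.2).

Definition is_array (n : nat) (P : {fset pt}) (I : n.-tuple pt) : Prop :=
  uniq I /\ forall x, x \in I <-> x \in P.

Definition valid_idx (n : nat) (k : int) : bool := (0 < k) && (k <= n%:Z).
Definition at_idx (n : nat) (I : n.-tuple pt) (k : int) : pt :=
  nth (0, 0) I (`|k|%N).-1.

(* W = (a_i, b_i, c_i)_{i=1..n} is a witness list of I; here the paper's index
   i corresponds to the ordinal i : 'I_n with value i - 1 *)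
Definition witness_list (n : nat) (P : {fset pt}) (W : 'I_n -> int * int * int)
    (I : n.-tuple pt) : Prop :=
  forall i : 'I_n, let: (a, b, c) := W i in
    (on_hull P (tnth I i) -> a = -1 /\ b = -1 /\ c = -1) /\
    (~ on_hull P (tnth I i) ->
       [/\ valid_idx n a, valid_idx n b, valid_idx n c &
           in_open_triangle (tnth I i) (at_idx I a) (at_idx I b) (at_idx I c)]).

Definition in_V (n : nat) (P : {fset pt}) (W : 'I_n -> int * int * int)
    (I : n.-tuple pt) : Prop :=
  is_array P I /\ witness_list P W I.

Definition is_corner_assignment (n : nat) (W : 'I_n -> int * int * int)
    (C : {ffun 'I_n -> int}) : Prop :=
  forall i : 'I_n, let: (a, b, c) := W i in C i \in [:: a; b; c].

Definition hull_list (n : nat) (P : {fset pt}) (I : n.-tuple pt) (h : seq int) :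
    Prop :=
  all (valid_idx n) h /\
  let hp := [seq at_idx I k | k <- h] in
  hull_ccw P hp /\ leftmost (head (0, 0) hp) hp.

Definition in_HL (n : nat) (P : {fset pt}) (h : seq int) : Prop :=
  exists I : n.-tuple pt, is_array P I /\ hull_list P I h.

(* a node stores its quadrangle (p, q, s, r), p q being its rooted edge,
   and optional children for (C^{pr}, p, r) and (C^{qs}, q, s) *)
Inductive qtree : Type :=
  QNode : pt -> pt -> pt -> pt -> option qtree -> option qtree -> qtree.

(* A rooted convex polygon (C, p, q) is given by the chain c of its vertices
   c_0 = p, c_1, ..., c_m = q, running from p to q along the boundary of C
   away from the edge pq.  qt_valid t c : t is a quadrangle tree of (C,p,q).
   The root's edge rs is c_i c_{i+1};  C^{pr} is the chain c_0..c_i and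
   C^{qs} is the chain c_m, ..., c_{i+1}. *)
Fixpoint qt_valid (t : qtree) (c : seq pt) : Prop :=
  match t with
  | QNode p q s r l rr =>
      exists i : nat,
        [/\ (i.+1 < size c)%N, p = nth (0, 0) c 0, q = nth (0, 0) c (size c).-1,
            r = nth (0, 0) c i & s = nth (0, 0) c i.+1] /\
        (match l with
         | None => i = 0%N
         | Some t1 => (0 < i)%N /\ qt_valid t1 (take i.+1 c)
         end) /\
        (match rr with
         | None => i.+2 = size c
         | Some t2 => (i.+2 < size c)%N /\ qt_valid t2 (rev (drop i.+1 c))
         end)
  end.

Definition qtree_for (P : {fset pt}) (t : qtree) : Prop :=
  exists h, hull_ccw P h /\
    exists c, (exists i, c = rot i h \/ c = rot i (rev h)) /\
              (2 <= size c)%N /\ qt_valid t c.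

Definition child_of (M N : qtree) : Prop :=
  match N with QNode _ _ _ _ l r => l = Some M \/ r = Some M end.

Inductive strict_desc : qtree -> qtree -> Prop :=
  | SD_child M N : child_of M N -> strict_desc M N
  | SD_trans M K N : child_of M K -> strict_desc K N -> strict_desc M N.

Definition node_of (T N : qtree) : Prop := N = T \/ strict_desc N T.

Definition population (P : {fset pt}) (N : qtree) (x : pt) : Prop :=
  match N with
  | QNode p q s r _ _ => x \in P /\ in_quadrangle x p q s r /\ orient p q x != 0
  end.

Definition rooted_depth (N : qtree) (x : pt) : R :=
  match N with QNode p q _ _ _ _ => `|orient p q x| end.

Definition qprec (P : {fset pt}) (T : qtree) (x y : pt) : Prop :=
  exists N, node_of T N /\ population P N x /\
    ((exists M, strict_desc M N /\ population P M y) \/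
     (population P N y /\ rooted_depth N x < rooted_depth N y)).

(* An ordered downdraft is encoded as (phi, sigma): phi x = Some (phi(x)) for
   x in P - ch(P) and phi x = None for x in ch(P) (outside the domain);
   sigma y lists the fiber phi^{-1}({y}) in its total order. *)
Definition OD_t (P : {fset pt}) :=
  ({ffun P -> option P} * {ffun P -> seq P})%type.

Definition is_ordered_downdraft (P : {fset pt}) (T : qtree) (o : OD_t P) : Prop :=
  let: (phi, sigma) := o in
  (forall x : P, (phi x = None <-> on_hull P (val x)) /\
     forall y : P, phi x = Some y -> qprec P T (val x) (val y)) /\
  (forall y : P, uniq (sigma y) /\
     forall x : P, (x \in sigma y) = (phi x == Some y)).

End Geometry.
Arguments is_ordered_downdraft {R} P T o.

(* Main.v *)
Require Import Defs.
From HB Require Import structures.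
From mathcomp Require Import all_boot all_order all_algebra.
From mathcomp Require Import finmap.
From mathcomp Require Import ring lra zify.
From Stdlib Require Import Classical ClassicalEpsilon.
Import Order.TTheory GRing.Theory Num.Theory.
Local Open Scope ring_scope.

Set Implicit Arguments. Unset Strict Implicit. Unset Printing Implicit Defensive.
Lemma quad_of (R : realFieldType) (p q s r y : pt R) (a b c d D : R) : 0 < D -> 0<=a -> 0<=b -> 0<=c -> 0<=d ->
  a+b+c+d = D -> y.1 * D = a * p.1+b * q.1+c * s.1+d * r.1 -> y.2*D = a * p.2+b * q.2+c * s.2+d * r.2 ->
  in_quadrangle y p q s r.
Proof.
move=> D0 a0 b0 c0 d0 E E1 E2.
have Dn : D != 0 by rewrite gt_eqF.
exists (a/D), (b/D), (c/D), (d/D).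
split; first by split; apply: divr_ge0 => //; apply: ltW.
split; first by rewrite -!mulrDl E divff.
split.
  by rewrite -!mulrA -!(mulrC p.1) -!(mulrC q.1) -!(mulrC s.1) -!(mulrC r.1) !mulrA -!mulrDl -E1 mulfK.
by rewrite -!mulrA -!(mulrC p.2) -!(mulrC q.2) -!(mulrC s.2) -!(mulrC r.2) !mulrA -!mulrDl -E2 mulfK.
Qed.

Lemma quad_in (R : realFieldType) (e : R) (p q s r y : pt R) : 0 < e * orient q p y -> 0 <= e * orient p r y ->
  0 <= e * orient r s y -> 0 <= e * orient s q y -> in_quadrangle y p q s r.
Proof.
move=> H1 H2 H3 H4.
case: (lerP 0 (e * orient p s y)) => Hps.
- apply: (@quad_of _ p q s r y (e * orient s q y) (e * orient p s y) (e * orient q p y) 0 (e * orient p s q)) => //.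
  + have -> : e * orient p s q = e * orient p s y + e * orient s q y + e * orient q p y.
      by rewrite /orient; ring.
    lra.
  + lra.
  + by rewrite /orient; ring.
  + by rewrite /orient; ring.
  + by rewrite /orient; ring.
- apply: (@quad_of _ p q s r y (e * orient r s y) 0 (e * orient p r y) (- (e * orient p s y)) (e * orient p r s)) => //.
  + have -> : e * orient p r s = e * orient p r y + e * orient r s y - e * orient p s y.
      by rewrite /orient; ring.
    lra.
  + lra.
  + by rewrite /orient; ring.
  + by rewrite /orient; ring.
  + by rewrite /orient; ring.
Qed.

Lemma tri_up (R : realFieldType) (e : R) (p q x a b c : pt R) : e != 0 ->
  0 < e * orient q p x -> in_open_triangle x a b c ->
  [\/ e * orient q p x < e * orient q p a, e * orient q p x < e * orient q p b
    | e * orient q p x < e * orient q p c].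
Proof.
move=> e0 Hx Ht.
case: (ltrP (e * orient q p x) (e * orient q p a)) => [Ha|Ha]; first by constructor 1.
case: (ltrP (e * orient q p x) (e * orient q p b)) => [Hb|Hb]; first by constructor 2.
case: (ltrP (e * orient q p x) (e * orient q p c)) => [Hc|Hc]; first by constructor 3.
exfalso.
set fx := e * orient q p x in Hx Ha Hb Hc.
set fa := e * orient q p a in Ha Hb Hc.
set fb := e * orient q p b in Ha Hb Hc.
set fc := e * orient q p c in Ha Hb Hc.
have Iden : orient a b c * fx = orient b c x * fa + orient c a x * fb + orient a b x * fc.
  by rewrite /fx /fa /fb /fc /orient; ring.
have HD : orient a b c = orient b c x + orient c a x + orient a b x by rewrite /orient; ring.
have Hz : orient b c x * (fx - fa) + orient c a x * (fx - fb) + orient a b x * (fx - fc) = 0.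
  by rewrite /fx /fa /fb /fc /orient; ring.
have [Ea [Eb Ec]] : fa = fx /\ fb = fx /\ fc = fx.
  have ga : 0 <= fx - fa by rewrite subr_ge0.
  have gb : 0 <= fx - fb by rewrite subr_ge0.
  have gc : 0 <= fx - fc by rewrite subr_ge0.
  move: Hz; set A := fx - fa in ga *; set B := fx - fb in gb *; set C := fx - fc in gc *.
  move=> Hz.
  case: Ht => [[H1 [H2 H3]]|[H1 [H2 H3]]].
  - have m1 := mulr_ge0 (ltW H2) ga; have m2 := mulr_ge0 (ltW H3) gb; have m3 := mulr_ge0 (ltW H1) gc.
    have z1 : orient b c x * A = 0 by lra.
    have z2 : orient c a x * B = 0 by lra.
    have z3 : orient a b x * C = 0 by lra.
    move/eqP: z1; rewrite mulf_eq0 (gt_eqF H2) /= /A subr_eq0 => /eqP e1.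
    move/eqP: z2; rewrite mulf_eq0 (gt_eqF H3) /= /B subr_eq0 => /eqP e2.
    move/eqP: z3; rewrite mulf_eq0 (gt_eqF H1) /= /C subr_eq0 => /eqP e3.
    by rewrite -e1 -e2 -e3.
  - have m1 := mulr_le0_ge0 (ltW H2) ga; have m2 := mulr_le0_ge0 (ltW H3) gb; have m3 := mulr_le0_ge0 (ltW H1) gc.
    have z1 : orient b c x * A = 0 by lra.
    have z2 : orient c a x * B = 0 by lra.
    have z3 : orient a b x * C = 0 by lra.
    move/eqP: z1; rewrite mulf_eq0 (lt_eqF H2) /= /A subr_eq0 => /eqP e1.
    move/eqP: z2; rewrite mulf_eq0 (lt_eqF H3) /= /B subr_eq0 => /eqP e2.
    move/eqP: z3; rewrite mulf_eq0 (lt_eqF H1) /= /C subr_eq0 => /eqP e3.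
    by rewrite -e1 -e2 -e3.
have D0 : orient a b c != 0.
  rewrite HD; case: Ht => [[H1 [H2 H3]]|[H1 [H2 H3]]].
  - by rewrite gt_eqF //; lra.
  - by rewrite lt_eqF //; lra.
have K1 : e * (p.1 - q.1) * orient a b c = (fc - fa) * (b.1 - a.1) - (fb - fa) * (c.1 - a.1).
  by rewrite /fa /fb /fc /orient; ring.
have K2 : e * (p.2 - q.2) * orient a b c = (fc - fa) * (b.2 - a.2) - (fb - fa) * (c.2 - a.2).
  by rewrite /fa /fb /fc /orient; ring.
rewrite Eb Ec Ea subrr !mul0r subrr in K1 K2.
move/eqP: K1; rewrite !mulf_eq0 (negbTE e0) (negbTE D0) orbF /= subr_eq0 => /eqP d1.
move/eqP: K2; rewrite !mulf_eq0 (negbTE e0) (negbTE D0) orbF /= subr_eq0 => /eqP d2.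
move: Hx; rewrite /fx /orient d1 d2 !subrr !mul0r subrr mulr0.
by rewrite ltxx.
Qed.


Section Chains.
Variable R : realFieldType.
Variable P : {fset pt R}.
Local Notation pt := (pt R).
Local Notation z0 := ((0, 0) : pt).

Definition chainp (e : R) (c : seq pt) := forall j, (j.+1 < size c)%N ->
  forall y, y \in P -> y != nth z0 c j -> y != nth z0 c j.+1 ->
  0 < e * orient (nth z0 c j) (nth z0 c j.+1) y.

Definition cycp (e : R) (c : seq pt) := forall j, (j < size c)%N ->
  forall y, y \in P -> y != nth z0 c j -> y != nth z0 c (j.+1 %% size c) ->
  0 < e * orient (nth z0 c j) (nth z0 c (j.+1 %% size c)) y.

Lemma cyc_chain e c : cycp e c -> chainp e c.
Proof.
move=> H j Hj y Py n1 n2.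
have E : (j.+1 %% size c = j.+1)%N by rewrite modn_small.
by have := H j (ltnW Hj) y Py n1; rewrite E => /(_ n2).
Qed.

Lemma nth_rot_mod (T : Type) (x0 : T) i (s : seq T) j : (i <= size s)%N -> (j < size s)%N ->
  nth x0 (rot i s) j = nth x0 s ((j + i) %% size s).
Proof.
move=> Hi Hj; rewrite /rot nth_cat size_drop.
case: ltnP => H.
  have H2 : (j + i < size s)%N by lia.
  by rewrite nth_drop modn_small // addnC.
have H3 : (j - (size s - i) < i)%N by lia.
rewrite nth_take //.
have E : (j + i = (j - (size s - i)) + size s)%N by lia.
have H4 : (j - (size s - i) < size s)%N by lia.
by rewrite E modnDr modn_small.
Qed.

Lemma cyc_rot e c i : cycp e c -> cycp e (rot i c).
Proof.
move=> H.
case: (leqP i (size c)) => Hi; last by rewrite rot_oversize ?(ltnW Hi).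
move=> j; rewrite size_rot => Hj y Py.
have Hc : (0 < size c)%N by lia.
rewrite nth_rot_mod // nth_rot_mod //; last exact: ltn_pmod.
have -> : ((j.+1 %% size c + i) %% size c = ((j + i) %% size c).+1 %% size c)%N.
  have E1 : forall a d, ((a %% d).+1 %% d = a.+1 %% d)%N by move=> a d; rewrite -addn1 modnDml addn1.
  by rewrite E1 modnDml addSn.
by apply: H => //; exact: ltn_pmod.
Qed.

Lemma orient_flip (a b y : pt) : orient b a y = - orient a b y.
Proof. by rewrite /orient; ring. Qed.

Lemma flip_pos (e : R) (a b y : pt) : 0 < e * orient a b y -> 0 < - e * orient b a y.
Proof. by move=> H; rewrite (orient_flip a b) mulrNN. Qed.

Lemma cyc_rev e c : cycp e c -> cycp (- e) (rev c).
Proof.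
move=> H j; rewrite size_rev => Hj y Py.
rewrite nth_rev //.
case: (ltnP j.+1 (size c)) => Hj1.
  rewrite (modn_small Hj1) nth_rev // => n1 n2.
  have Ht : (size c - j.+2 < size c)%N by lia.
  have := H _ Ht y Py.
  have -> : ((size c - j.+2).+1 = size c - j.+1)%N by lia.
  rewrite modn_small; last by lia.
  by move=> /(_ n2 n1) /flip_pos.
have Hs : (0 < size c)%N by lia.
have Ejs : j.+1 = size c by lia.
have Ej : (j.+1 %% size c = 0)%N by rewrite Ejs modnn.
rewrite Ej.
have -> : (size c - j.+1 = 0)%N by lia.
rewrite nth_rev //.
have -> : (size c - 1 = j)%N by lia.
move=> n1 n2.
have := H j Hj y Py; rewrite Ej.
by move=> /(_ n2 n1) /flip_pos.
Qed.

Lemma chain_take e c k : chainp e c -> chainp e (take k c).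
Proof.
move=> H; case: (ltnP k (size c)) => Hk; last by rewrite take_oversize.
move=> j; rewrite size_take Hk => Hj y Py.
have Hc : (j.+1 < size c)%N by lia.
rewrite !nth_take //; last by lia.
exact: H.
Qed.

Lemma chain_revdrop e c k : chainp e c -> chainp (- e) (rev (drop k c)).
Proof.
move=> H j; rewrite size_rev size_drop => Hj y Py.
rewrite !nth_rev ?size_drop //; last by lia.
rewrite !nth_drop.
have Ht : ((k + (size c - k - j.+2)).+1 < size c)%N by lia.
have := H _ Ht y Py.
have -> : ((k + (size c - k - j.+2)).+1 = k + (size c - k - j.+1))%N by lia.
by move=> A n1 n2; apply: flip_pos; apply: A.
Qed.

End Chains.



Section Tree.
Variable R : realFieldType.
Variable P : {fset pt R}.
Local Notation pt := (pt R).
Local Notation z0 := ((0, 0) : pt).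

Fixpoint qsize (t : qtree R) : nat :=
  match t with QNode _ _ _ _ l r =>
    ((match l with Some t1 => qsize t1 | None => 0 end) +
     (match r with Some t2 => qsize t2 | None => 0 end)).+1 end.

Lemma child_size (M N : qtree R) : child_of M N -> (qsize M < qsize N)%N.
Proof. by case: N => p q s r l rr /= [->|->] /=; lia. Qed.

Lemma sd_size (M N : qtree R) : strict_desc M N -> (qsize M < qsize N)%N.
Proof.
elim=> [A B /child_size //|A K B /child_size H1 _ H2]; lia.
Qed.

Lemma sd_trans (A B C : qtree R) : strict_desc A B -> strict_desc B C -> strict_desc A C.
Proof.
move=> H; elim: H C => [A' B' H1 C' H2|A' K B' H1 _ IH C' H2].
  exact: SD_trans H1 H2.
exact: SD_trans H1 (IH _ H2).
Qed.

Lemma orient_aa (a y : pt) : orient a a y = 0.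
Proof. by rewrite /orient; ring. Qed.
Lemma orient_aba (a b : pt) : orient a b a = 0.
Proof. by rewrite /orient; ring. Qed.
Lemma orient_abb (a b : pt) : orient a b b = 0.
Proof. by rewrite /orient; ring. Qed.

Definition reg (e : R) (t : qtree R) (y : pt) :=
  match t with QNode p q _ _ _ _ => 0 < e * orient q p y end.

Definition GoodD (N : qtree R) (y : pt) := exists c e, (e = 1 \/ e = -1) /\
  qt_valid N c /\ chainp P e c /\ reg e N y.

Lemma valid_ends p q s r l rr c : qt_valid (QNode p q s r l rr) c ->
  p = nth z0 c 0 /\ q = nth z0 c (size c).-1.
Proof. by case=> i [[_ Hp Hq _ _] _]. Qed.

Lemma split_node t c e y : qt_valid t c -> chainp P e c -> (e = 1 \/ e = -1) ->
  y \in P -> reg e t y ->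
  population P t y \/ exists M, child_of M t /\ GoodD M y.
Proof.
case: t => p q s r l rr /= [i [[Hi Hp Hq Hr Hs] [Hl Hrr]]] Hch He Py Hy.
case: (ltrP 0 (e * orient r p y)) => HA.
  right; case: l Hl => [t1 [Hi0 V1]|Hi0]; last first.
    by move: HA; rewrite Hi0 in Hr; rewrite Hr -Hp orient_aa mulr0 ltxx.
  exists t1; split; first by left.
  exists (take i.+1 c), e; split => //; split => //; split; first exact: chain_take.
  case: t1 V1 => p1 q1 s1 r1 l1 rr1 V1 /=.
  have [E1 E2] := valid_ends V1.
  rewrite size_take Hi /= in E2.
  by rewrite E1 E2 nth_take // nth_take // -Hr -Hp.
case: (ltrP 0 (- e * orient s q y)) => HB.
  right; case: rr Hrr => [t2 [Hi2 V2]|Hi2]; last first.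
    move: HB; have -> : s = q by rewrite Hs Hq -Hi2.
    by rewrite orient_aa mulr0 ltxx.
  exists t2; split; first by right.
  exists (rev (drop i.+1 c)), (- e); split.
    by case: He => ->; [right|left]; rewrite ?opprK.
  split => //; split; first exact: chain_revdrop.
  case: t2 V2 => p2 q2 s2 r2 l2 rr2 V2 /=.
  have [E1 E2] := valid_ends V2.
  rewrite size_rev size_drop in E2.
  rewrite E1 E2 nth_rev ?size_drop; last by lia.
  rewrite nth_rev ?size_drop; last by lia.
  rewrite !nth_drop.
  have -> : (i.+1 + (size c - i.+1 - 1) = (size c).-1)%N by lia.
  have -> : (i.+1 + (size c - i.+1 - (size c - i.+1).-1.+1) = i.+1)%N by lia.
  by rewrite -Hq -Hs.
left; split => //; split.
  apply: (@quad_in _ e) => //.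
  - by rewrite orient_flip mulrN oppr_ge0.
  - case: (eqVneq y r) => [->|nr]; first by rewrite ?orient_aba ?orient_abb mulr0.
    case: (eqVneq y s) => [->|ns]; first by rewrite ?orient_aba ?orient_abb mulr0.
    by apply: ltW; rewrite Hr Hs; apply: Hch => //; rewrite -?Hr -?Hs.
  - by rewrite mulNr oppr_le0 in HB.
rewrite orient_flip oppr_eq0; apply: contraTneq Hy => ->.
by rewrite mulr0 ltxx.
Qed.

Lemma find_node t c e y : qt_valid t c -> chainp P e c -> (e = 1 \/ e = -1) ->
  y \in P -> reg e t y ->
  exists N, (N = t \/ strict_desc N t) /\ population P N y /\ GoodD N y.
Proof.
move: {2}(qsize t) (leqnn (qsize t)) => k.
elim: k t c e => [|k IH] t c e Hk V Hch He Py Hy.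
  by case: t Hk {V Hy}.
case: (split_node V Hch He Py Hy) => [Hp|[M [HM [c' [e' [He' [V' [Hch' Hy']]]]]]]].
  by exists t; split; [left|split => //; exists c, e].
have HMk : (qsize M <= k)%N by have := child_size HM; lia.
have [N [HN [HpN HgN]]] := IH M c' e' HMk V' Hch' He' Py Hy'.
exists N; split => //; right.
case: HN => [->|HN]; first exact: SD_child.
exact: sd_trans HN (SD_child HM).
Qed.

End Tree.


Section Hull.
Variable R : realFieldType.
Variable P : {fset pt R}.
Local Notation pt := (pt R).
Local Notation z0 := ((0, 0) : pt).

Definition lex (x y : pt) := x.1 < y.1 \/ (x.1 = y.1 /\ x.2 <= y.2).

Lemma lex_total x y : lex x y \/ lex y x.
Proof.
rewrite /lex; case: (ltgtP x.1 y.1) => H; [left; left | right; left | ] => //.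
by case: (lerP x.2 y.2) => H2; [left; right | right; right; split => //; apply: ltW].
Qed.

Lemma lex_trans x y z : lex x y -> lex y z -> lex x z.
Proof.
rewrite /lex => [[H1|[E1 H1]] [H2|[E2 H2]]].
- by left; apply: lt_trans H1 H2.
- by left; rewrite -E2.
- by left; rewrite E1.
- by right; split; [rewrite E1 | apply: le_trans H1 H2].
Qed.

Lemma lex_anti x y : lex x y -> lex y x -> x = y.
Proof.
case: x => x1 x2; case: y => y1 y2; rewrite /lex /= => [[H1|[E1 H1]] [H2|[E2 H2]]].
- by move: (lt_trans H1 H2); rewrite ltxx.
- by move: H1; rewrite E2 ltxx.
- by move: H2; rewrite E1 ltxx.
- by rewrite E1; congr pair; apply: le_anti; rewrite H1 H2.
Qed.

Lemma leftmost_ex (h : seq pt) : h != [::] -> exists x, leftmost x h.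
Proof.
elim: h => // a h IH _.
case: (eqVneq h [::]) => [->|hn].
  exists a; split; first by rewrite inE.
  by move=> y; rewrite inE => /eqP ->; right.
have [x [Hx Hl]] := IH hn.
case: (lex_total a x) => H.
  exists a; split; first by rewrite inE eqxx.
  move=> y; rewrite inE => /orP [/eqP ->|Hy]; first by right.
  exact: lex_trans H (Hl y Hy).
exists x; split; first by rewrite inE Hx orbT.
move=> y; rewrite inE => /orP [/eqP ->|Hy] //.
exact: Hl.
Qed.

Lemma leftmost_uniq x y (h1 h2 : seq pt) : leftmost x h1 -> leftmost y h2 -> h1 =i h2 -> x = y.
Proof.
move=> [Hx Hl1] [Hy Hl2] E.
apply: lex_anti; [apply: Hl1; rewrite E | apply: Hl2; rewrite -E] => //.
Qed.

Lemma hull_cyc h : hull_ccw P h -> cycp P 1 h.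
Proof. by case=> _ _ H j Hj y Py n1 n2; rewrite mul1r; apply: H. Qed.

Lemma hull_rot h i : hull_ccw P h -> hull_ccw P (rot i h).
Proof.
move=> Hh; have Hc := cyc_rot (i:=i) (hull_cyc Hh).
case: Hh => U M _; split; first by rewrite rot_uniq.
  by move=> x; rewrite mem_rot.
by move=> j Hj x Px n1 n2; have := Hc j Hj x Px n1 n2; rewrite mul1r.
Qed.

Lemma hull_unique h1 h2 : hull_ccw P h1 -> hull_ccw P h2 ->
  nth z0 h1 0 = nth z0 h2 0 -> h1 = h2.
Proof.
move=> [U1 M1 C1] [U2 M2 C2] E0.
have E : h1 =i h2.
  move=> x; apply/idP/idP => H; [apply/M2; apply/M1 | apply/M1; apply/M2] => //.
have Hs : size h1 = size h2 by apply: perm_size; apply: uniq_perm.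
apply: (@eq_from_nth _ z0 _ _ Hs) => j.
elim: j => [_|j IH Hj]; first exact: E0.
have Ej := IH (ltnW Hj).
case: (eqVneq (nth z0 h1 j.+1) (nth z0 h2 j.+1)) => // Hne.
exfalso.
have Hj2 : (j.+1 < size h2)%N by rewrite -Hs.
set x := nth z0 h1 j in Ej; set z1 := nth z0 h1 j.+1 in Hne; set z2 := nth z0 h2 j.+1 in Hne.
have z1P : z1 \in P by have [H _] := M1 z1; case: (H (mem_nth z0 Hj)).
have z2P : z2 \in P by have [H _] := M2 z2; case: (H (mem_nth z0 Hj2)).
have n1 : z2 != x by rewrite Ej /z2 nth_uniq // ?(ltnW Hj2) //; lia.
have n2 : z1 != x by rewrite /z1 /x nth_uniq // ?(ltnW Hj) //; lia.
have A := C1 j (ltnW Hj) z2 z2P n1.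
rewrite modn_small // in A; have Hne' : z2 != z1 by rewrite eq_sym.
have {A} A := A Hne'.
have B := C2 j (ltnW Hj2) z1 z1P.
rewrite modn_small // -Ej in B; have {B} B := B n2 Hne.
have : orient x z2 z1 = - orient x z1 z2 by rewrite /orient; ring.
move=> E'; rewrite E' in B.
have A' : 0 < orient x z1 z2 := A.
by have := addr_gt0 A' B; rewrite addrN ltxx.
Qed.
End Hull.


Lemma min_ex (Q : nat -> Prop) : (exists m, Q m) -> exists m, Q m /\ forall m', Q m' -> (m <= m')%N.
Proof.
move=> [m Hm]; elim/ltn_ind: m Hm => m IH Hm.
case: (classic (exists m', Q m' /\ (m' < m)%N)) => [[m' [H1 H2]]|H].
  exact: IH H2 H1.
exists m; split => // m' Hm'; case: (leqP m m') => // Hlt.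
by exfalso; apply: H; exists m'.
Qed.

Lemma count_lt (T0 : eqType) (p q : pred T0) (s : seq T0) y :
  (forall w, p w -> q w) -> y \in s -> q y -> ~~ p y -> (count p s < count q s)%N.
Proof.
move=> Hpq; elim: s => // a s IH; rewrite in_cons => /orP [/eqP <-|Hy] Hq Hp /=.
  have := sub_count Hpq s; rewrite Hq (negbTE Hp) /=; lia.
have := IH Hy Hq Hp; have := Hpq a; case: (p a); case: (q a) => //= H; lia.
Qed.

Section Main.
Variable R : realFieldType.
Variable n : nat.
Variable P : {fset pt R}.
Variable W : 'I_n -> int * int * int.
Variable T : qtree R.
Hypothesis HP : #|` P| = n.
Hypothesis HT : qtree_for P T.
Local Notation pt := (pt R).
Local Notation z0 := ((0, 0) : pt).

Definition vv (N : qtree R) (z : pt) : nat :=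
  (qsize N * n.+1 + count (fun w => (rooted_depth N z < rooted_depth N w)%R) (enum_fset P))%N.

Definition Pot (z : pt) (m : nat) := exists N, node_of T N /\ population P N z /\ GoodD P N z /\ vv N z = m.

Definition minPot z m := Pot z m /\ forall m', Pot z m' -> (m <= m')%N.

Lemma rd_eq (e : R) p q s r l rr z : (e = 1 \/ e = -1) -> 0 < e * orient q p z ->
  rooted_depth (QNode p q s r l rr) z = e * orient q p z.
Proof.
move=> He Hz /=; rewrite orient_flip.
case: He Hz => -> Hz; first by rewrite mul1r in Hz *; rewrite normrN gtr0_norm.
by rewrite mulN1r in Hz *; rewrite gtr0_norm.
Qed.

Lemma node_desc N N' : node_of T N -> (N' = N \/ strict_desc N' N) -> node_of T N'.
Proof.
move=> HN [->|sd] //; right; case: HN => [E|sd2]; first by rewrite -E.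
exact: sd_trans sd sd2.
Qed.

Lemma corner x a b c N : a \in P -> b \in P -> c \in P -> in_open_triangle x a b c ->
  node_of T N -> population P N x -> GoodD P N x ->
  exists y, (y = a \/ y = b \/ y = c) /\ qprec P T x y /\ exists m, (m < vv N x)%N /\ Pot y m.
Proof.
move=> Pa Pb Pc Ht HN HpN [c0 [e [He [V [Hch Hreg]]]]].
have e0 : e != 0 by case: He => ->; rewrite ?oppr_eq0 oner_eq0.
suff G : forall y, y \in P -> rooted_depth N x < rooted_depth N y ->
    reg e N y -> qprec P T x y /\ exists m, (m < vv N x)%N /\ Pot y m.
  case: N HN HpN V Hreg G => p q s r l rr HN HpN V /= Hreg G.
  have rdx := rd_eq s r l rr He Hreg.
  have [Hy|Hy|Hy] := tri_up e0 Hreg Ht.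
  - exists a; split; first by left.
    apply: G => //; first by move: rdx (rd_eq s r l rr He (lt_trans Hreg Hy)) => /= -> ->.
    exact: lt_trans Hy.
  - exists b; split; first by right; left.
    apply: G => //; first by move: rdx (rd_eq s r l rr He (lt_trans Hreg Hy)) => /= -> ->.
    exact: lt_trans Hy.
  - exists c; split; first by right; right.
    apply: G => //; first by move: rdx (rd_eq s r l rr He (lt_trans Hreg Hy)) => /= -> ->.
    exact: lt_trans Hy.
move=> y Py Hxy Hry.
have [N' [HN' [HpN' HgN']]] := find_node V Hch He Py Hry.
have HNT' := node_desc HN HN'.
case: HN' => [EN|sd].
- split.
    exists N; split => //; split => //; right; split => //; by rewrite -EN.
  exists (vv N' y); split; last by exists N'.
  rewrite EN /vv ltn_add2l.
  apply: (count_lt (y := y)).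
  + by move=> w /=; apply: lt_trans.
  + exact: Py.
  + exact: Hxy.
  + by rewrite /= ltxx.
- split.
    exists N; split => //; split => //; left; exists N'; split => //.
  exists (vv N' y); split; last by exists N'.
  have := sd_size sd.
  have := count_size (fun w => rooted_depth N' y < rooted_depth N' w) (enum_fset P).
  rewrite /vv HP; nia.
Qed.

Lemma interior_pot x : x \in P -> ~ on_hull P x -> exists m, Pot x m.
Proof.
move=> Px Hx; case: HT => h0 [Hh0 [c [[i Hc] [Hs V]]]].
have memc : forall z, z \in c -> on_hull P z.
  have [_ M _] := Hh0; move=> z; case: Hc => ->; rewrite mem_rot ?mem_rev => /M [] //.
have [e [He Hcy]] : exists e : R, (e = 1 \/ e = -1) /\ cycp P e c.
  case: Hc => ->; [exists 1 | exists (-1)]; split; auto.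
  - exact: cyc_rot (hull_cyc Hh0).
  - exact: cyc_rot (cyc_rev (hull_cyc Hh0)).
have Hreg : reg e T x.
  case ET: T V => [p q s r l rr] V /=.
  have [E1 E2] := valid_ends V.
  have Hj : ((size c).-1 < size c)%N by lia.
  have := Hcy _ Hj x Px.
  have -> : ((size c).-1.+1 %% size c = 0)%N by rewrite prednK ?modnn //; lia.
  rewrite -E1 -E2; apply.
  - by apply/negP => /eqP Ex; apply: Hx; rewrite Ex; apply: memc; rewrite E2 mem_nth.
  - by apply/negP => /eqP Ex; apply: Hx; rewrite Ex; apply: memc; rewrite E1; apply: mem_nth; exact: ltnW Hs.
have [N [HN [HpN HgN]]] := find_node V (cyc_chain Hcy) He Px Hreg.
by exists (vv N x), N.
Qed.

End Main.


Section Main2.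
Variable R : realFieldType.
Variable n : nat.
Variable P : {fset pt R}.
Variable W : 'I_n -> int * int * int.
Variable T : qtree R.
Hypothesis HP : #|` P| = n.
Hypothesis HT : qtree_for P T.
Local Notation pt := (pt R).
Local Notation z0 := ((0, 0) : pt).

Definition iW (j : 'I_n) := valid_idx n (W j).1.1.

Lemma valid_pos k : valid_idx n k -> exists j : 'I_n, k = Posz j.+1.
Proof.
case: k => [k|k]; rewrite /valid_idx => /andP [H1 H2] //.
rewrite ltz_nat lez_nat in H1 H2.
have Hk : (k.-1 < n)%N by lia.
by exists (Ordinal Hk); congr Posz => /=; lia.
Qed.

Lemma at_idx_tnth (I : n.-tuple pt) (j : 'I_n) : at_idx I (Posz j.+1) = tnth I j.
Proof. by rewrite /at_idx /= (tnth_nth z0). Qed.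

Lemma tnth_inj (I : n.-tuple pt) : uniq I -> injective (tnth I).
Proof.
move=> U j1 j2; rewrite !(tnth_nth z0) => /eqP; rewrite nth_uniq ?size_tuple //.
by move=> /eqP; apply: ord_inj.
Qed.

Lemma at_idx_inj (I : n.-tuple pt) k1 k2 : uniq I -> valid_idx n k1 -> valid_idx n k2 ->
  at_idx I k1 = at_idx I k2 -> k1 = k2.
Proof.
move=> U /valid_pos [j1 ->] /valid_pos [j2 ->]; rewrite !at_idx_tnth => /(tnth_inj U) ->.
by [].
Qed.

Lemma at_idx_in (I : n.-tuple pt) k : is_array P I -> valid_idx n k -> at_idx I k \in P.
Proof. by move=> [U M] /valid_pos [j ->]; rewrite at_idx_tnth; apply/M; apply: mem_tnth. Qed.

Lemma iW_hull (I : n.-tuple pt) j : in_V P W I -> on_hull P (tnth I j) <-> ~~ iW j.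
Proof.
case=> _ Hw; have := Hw j; rewrite /iW; case: (W j) => [[a b] c] /= [H1 H2]; split.
  by move/H1 => [-> _].
move=> Hn; apply: NNPP => Hh; have [Hv _ _ _] := H2 Hh.
by rewrite Hv in Hn.
Qed.

Lemma hull_list_ex (I : n.-tuple pt) : is_array P I -> exists h, hull_list P I h.
Proof.
move=> [U M]; case: HT => h0 [Hh0 [c [[i Hc] [Hs _]]]].
have hn : h0 != [::].
  by move: Hs; case: Hc => ->; rewrite size_rot ?size_rev; case: (h0).
have [x0 Hl] := leftmost_ex hn.
have Hhr : hull_ccw P (rot (index x0 h0) h0) := hull_rot (index x0 h0) Hh0.
have [_ Mr _] := Hhr.
have inI : forall x, x \in rot (index x0 h0) h0 -> x \in I.
  by move=> x /Mr [Px _]; apply/M.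
exists [seq Posz (index x I).+1 | x <- rot (index x0 h0) h0].
have Emap : [seq at_idx I k0 | k0 <- [seq Posz (index x I).+1 | x <- rot (index x0 h0) h0]]
    = rot (index x0 h0) h0.
  by rewrite -map_comp map_id_in // => x /inI Hx /=; rewrite /at_idx /= nth_index.
split.
  apply/allP => k0 /mapP [x /inI Hx ->]; rewrite /valid_idx ltz_nat lez_nat /=.
  by move: Hx; rewrite -index_mem size_tuple.
rewrite Emap; split => //.
have [Hx0 Hl'] := Hl.
have Hk : (index x0 h0 < size h0)%N by rewrite index_mem.
have Hhead : head z0 (rot (index x0 h0) h0) = x0.
  rewrite -nth0 nth_rot_mod; [|exact: ltnW|lia].
  by rewrite add0n modn_small // nth_index.
rewrite Hhead; split; first by rewrite mem_rot.
by move=> y; rewrite mem_rot; apply: Hl'.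
Qed.

Lemma valS (s : seq pt) : all (mem P) s -> map val (pmap (insub : pt -> option P) s) = s.
Proof.
elim: s => //= x s IH /andP [Px Hs].
case: insubP => [u _ Eu|Hn]; first by rewrite /= Eu IH.
by move: Hn; rewrite /= Px.
Qed.


Definition Decode (I : n.-tuple pt) (o : OD_t P) (C : {ffun 'I_n -> int}) (h : seq int) : Prop :=
  let: (phi, sigma) := o in
  [/\ hull_list P I h,
     (forall j, iW j -> valid_idx n (C j) /\ exists m0, minPot n P T (tnth I j) m0 /\
        exists m1, (m1 < m0)%N /\ Pot n P T (at_idx I (C j)) m1) &
     (forall (y : P) k, valid_idx n k -> val y = at_idx I k ->
        map val (sigma y) = [seq tnth I j | j <- enum 'I_n & iW j && (C j == k)])].

Definition Spec (I : n.-tuple pt) (t : OD_t P * {ffun 'I_n -> int} * seq int) : Prop :=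
  let: (o, C, h) := t in
  [/\ is_ordered_downdraft P T o, is_corner_assignment W C & in_HL n P h] /\ Decode I o C h.

Lemma pick_idx (I : n.-tuple pt) (x : P) : is_array P I ->
  exists j, [pick j | tnth I j == val x] = Some j /\ tnth I j = val x.
Proof.
move=> [U M]; have : val x \in I by apply/M; exact: valP.
case/tnthP => j Ej; case: pickP => [j' /eqP Ej'|H]; first by exists j'.
by have := H j; rewrite -Ej eqxx.
Qed.

Lemma exists_spec (I : n.-tuple pt) : in_V P W I -> exists t, Spec I t.
Proof.
move=> HV; have HV' := HV; case: HV' => [[U M] Hw].
have HA : is_array P I by [].
have Hcorner : forall j : 'I_n, exists k : int,
    (iW j -> [/\ k \in [:: (W j).1.1; (W j).1.2; (W j).2], valid_idx n k,
       qprec P T (tnth I j) (at_idx I k) &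
       exists m0, minPot n P T (tnth I j) m0 /\ exists m1, (m1 < m0)%N /\ Pot n P T (at_idx I k) m1])
    /\ (~~ iW j -> k = (W j).1.1).
  move=> j; case: (boolP (iW j)) => Hj; last by exists (W j).1.1.
  have Hnh : ~ on_hull P (tnth I j) by move/(iW_hull j HV); rewrite Hj.
  have Px : tnth I j \in P by apply/M; exact: mem_tnth.
  have [m Hm] := interior_pot HP HT Px Hnh.
  have [m0 [Hm0 Hmin]] := min_ex (ex_intro _ m Hm).
  have [N [HN [HpN [HgN Hv]]]] := Hm0.
  move: (Hw j); case E: (W j) => [[a b] c] [_ H2].
  have [Va Vb Vc Ht] := H2 Hnh.
  have [y [Hy [Hq [m1 [Hm1 Hp1]]]]] :=
    corner HP (at_idx_in HA Va) (at_idx_in HA Vb) (at_idx_in HA Vc) Ht HN HpN HgN.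
  have Hmp : forall k, y = at_idx I k -> exists m0, minPot n P T (tnth I j) m0 /\
      exists m1, (m1 < m0)%N /\ Pot n P T (at_idx I k) m1.
    move=> k Ek; exists m0; split; first by split.
    by exists m1; rewrite -Ek -Hv; split.
  case: Hy => [Ey|[Ey|Ey]]; [exists a | exists b | exists c]; (split; last by case);
    (move=> _; split; [by rewrite /= !inE eqxx ?orbT | done | by rewrite -Ey | exact: Hmp]).
have [Cf HC] := fin_all_exists Hcorner.
pose C := [ffun j => Cf j].
have HCv : forall j, iW j -> valid_idx n (C j).
  by move=> j Hj; rewrite ffunE; have [] := (HC j).1 Hj.
pose phi : {ffun P -> option P} := [ffun x : P =>
  if [pick j | tnth I j == val x] is Some j then
    (if iW j then insub (at_idx I (C j)) else None) else None].
pose S (y : P) := [seq tnth I j | j <- enum 'I_n & iW j && (at_idx I (C j) == val y)].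
pose sigma : {ffun P -> seq P} := [ffun y : P => pmap insub (S y)].
have HS : forall y, map val (sigma y) = S y.
  move=> y; rewrite ffunE valS //; apply/allP => z /mapP [j _ ->] /=.
  by apply/M; exact: mem_tnth.
have [h Hh] := hull_list_ex HA.
exists ((phi, sigma), C, h); split; split.
- split.
    move=> x; have [j [Ep Ej]] := pick_idx x HA.
    rewrite /phi ffunE Ep; case: (boolP (iW j)) => Hj.
      have [_ Hv Hq _] := (HC j).1 Hj.
      have Hin := at_idx_in HA (HCv j Hj).
      case: insubP => [u _ Eu|Hn]; last by move: Hn; rewrite /= Hin.
      split.
        split => // Hh'; exfalso; move: Hh'; rewrite -Ej => /(iW_hull j HV).
        by rewrite Hj.
      move=> y [<-]; rewrite Eu -Ej ffunE; exact: Hq.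
    split; last by [].
    split => // _; rewrite -Ej; exact/(iW_hull j HV).
  move=> y; split.
    apply: (@map_uniq _ _ val); rewrite HS map_inj_uniq; last exact: tnth_inj U.
    by rewrite filter_uniq ?enum_uniq.
  move=> x; have [j [Ep Ej]] := pick_idx x HA.
  rewrite /phi /sigma !ffunE Ep mem_pmap_sub /S -Ej (mem_map (tnth_inj U)) mem_filter mem_enum andbT.
  case: (boolP (iW j)) => Hj //=.
  have Hin := at_idx_in HA (HCv j Hj).
  case: insubP => [u _ Eu|Hn]; last by move: Hn; rewrite /= Hin.
  by rewrite -Eu val_eqE.
- move=> j; rewrite ffunE; case: (boolP (iW j)) => Hj.
    have [Hm _ _ _] := (HC j).1 Hj.
    by move: Hm; case: (W j) => [[a b] c].
  rewrite ((HC j).2 Hj); case: (W j) => [[a b] c] /=.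
  by rewrite inE eqxx.
- exists I; exact: (conj HA Hh).
- exact: Hh.
- move=> j Hj; split; first exact: HCv.
  by have [_ _ _] := (HC j).1 Hj; rewrite ffunE.
- move=> y k Hk Hy; rewrite HS /S; congr map; apply: eq_filter => j /=.
  case: (boolP (iW j)) => //= Hj; rewrite Hy; apply/eqP/eqP => [E|->] //.
  exact: at_idx_inj U (HCv j Hj) Hk E.
Qed.


Lemma spec_inj (I1 I2 : n.-tuple pt) t : in_V P W I1 -> in_V P W I2 -> Spec I1 t -> Spec I2 t -> I1 = I2.
Proof.
case: t => [[[phi sigma] C] h] HV1 HV2 [_ [HL1 D21 D31]] [_ [HL2 D22 D32]].
have [[U1 M1] _] := HV1; have [[U2 M2] _] := HV2.
have Ehp : [seq at_idx I1 k | k <- h] = [seq at_idx I2 k | k <- h].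
  have HL1' := HL1; move: HL1' => [Va1] /= [Hc1 Hl1].
  have HL2' := HL2; move: HL2' => [Va2] /= [Hc2 Hl2].
  apply: (hull_unique Hc1 Hc2).
  have E : [seq at_idx I1 k | k <- h] =i [seq at_idx I2 k | k <- h].
    have [_ Mc1 _] := Hc1; have [_ Mc2 _] := Hc2.
    by move=> x; apply/idP/idP => H; [apply/Mc2; apply/Mc1 | apply/Mc1; apply/Mc2].
  rewrite !nth0; exact: leftmost_uniq Hl1 Hl2 E.
have Hhull : forall j, ~~ iW j -> tnth I1 j = tnth I2 j.
  move=> j Hj.
  have Hh1 : on_hull P (tnth I1 j) := proj2 (iW_hull j HV1) Hj.
  have HL1' := HL1; move: HL1' => [Va1] /= [Hc1 _]; have [_ Mc1 _] := Hc1.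
  have : tnth I1 j \in [seq at_idx I1 k | k <- h].
    by apply/Mc1; split => //; apply/M1; exact: mem_tnth.
  case/mapP => k Hk Ek.
  have Vk : valid_idx n k := allP Va1 k Hk.
  have Vj : valid_idx n (Posz j.+1) by rewrite /valid_idx ltz_nat lez_nat /=.
  have Ekj : k = Posz j.+1 by apply: (at_idx_inj U1 Vk Vj); rewrite at_idx_tnth -Ek.
  rewrite -!at_idx_tnth -Ekj.
  by move/eq_in_map: Ehp => /(_ k Hk).
have Claim : forall m j, (~~ iW j \/ exists m', (m' <= m)%N /\ Pot n P T (tnth I1 j) m') ->
    tnth I1 j = tnth I2 j.
  elim/ltn_ind => m IH j [Hj|[m' [Hm' Hp]]]; first exact: Hhull.
  case: (boolP (iW j)) => Hj; last exact: Hhull.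
  have [Vc [m0 [[Hm0 Hmin] [m1 [Hm1 Hp1]]]]] := D21 j Hj.
  have Hm0' := Hmin _ Hp.
  have [jj Ejj] := valid_pos Vc.
  have Ey : tnth I1 jj = tnth I2 jj.
    apply: (IH m1); first by lia.
    by right; exists m1; split => //; rewrite -at_idx_tnth -Ejj.
  have Py : tnth I1 jj \in P by apply/M1; exact: mem_tnth.
  have V1 : val (FSetSub Py) = at_idx I1 (C j) by rewrite /= Ejj at_idx_tnth.
  have V2 : val (FSetSub Py) = at_idx I2 (C j) by rewrite /= Ejj at_idx_tnth Ey.
  have E1 := D31 (FSetSub Py) (C j) Vc V1.
  have E2 := D32 (FSetSub Py) (C j) Vc V2.
  have Ejm : j \in [seq j' <- enum 'I_n | iW j' && (C j' == C j)].
    by rewrite mem_filter Hj eqxx mem_enum.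
  rewrite E1 in E2.
  by move/eq_in_map: E2 => /(_ j Ejm).
apply: eq_from_tnth => j.
case: (boolP (iW j)) => Hj; last exact: Hhull.
have [_ [m0 [[Hm0 _] _]]] := D21 j Hj.
by apply: (Claim m0); right; exists m0.
Qed.

End Main2.


Unset Implicit Arguments. Set Strict Implicit.

Theorem lemma5p3 (R : realFieldType) (n : nat) (P : {fset pt R})
    (W : 'I_n -> int * int * int) (T : qtree R) :
  (#|` P|)%fset = n -> general_position P -> qtree_for P T ->
  exists Phi : n.-tuple (pt R) -> (OD_t P * {ffun 'I_n -> int} * seq int)%type,
    (forall I, in_V P W I ->
       let: (o, C, h) := Phi I in
       [/\ is_ordered_downdraft P T o, is_corner_assignment W C & in_HL n P h]) /\
    (forall I1 I2, in_V P W I1 -> in_V P W I2 -> Phi I1 = Phi I2 -> I1 = I2).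
Proof.
move=> HP _ HT.
pose dflt : OD_t P * {ffun 'I_n -> int} * seq int :=
  (([ffun => None], [ffun => [::]]), [ffun => 0], [::]).
have Hex : forall I : n.-tuple (pt R), exists t, in_V P W I -> Spec (P:=P) W T I t.
  move=> I; case: (classic (in_V P W I)) => H; last by exists dflt.
  have [t Ht] := exists_spec HP HT H; by exists t.
pose Phi I := proj1_sig (constructive_indefinite_description _ (Hex I)).
exists Phi; split.
  move=> I HI; rewrite /Phi; case: (constructive_indefinite_description _ _) => t /= Ht.
  by case: t Ht => [[o C] h] Ht; case: (Ht HI).
move=> I1 I2 H1 H2; rewrite /Phi.
case: (constructive_indefinite_description _ (Hex I1)) => t1 /= Ht1.
case: (constructive_indefinite_description _ (Hex I2)) => t2 /= Ht2 E.
apply: (spec_inj HP H1 H2 (Ht1 H1)); rewrite E; exact: Ht2 H2.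
Qed.
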